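(* Let $n=p_1p_2\cdots p_r$, where $r\geq 3$ and $p_1<p_2<\cdots<p_r$ are primes, and let $3\leq s\leq r$. If $\deg(p_{s-1}p_s\cdots p_r)\geq\deg(p_sp_{s+1}\cdots p_r)$ in $\mathcal{P}(C_n)$, then $\deg(p_{s-2}p_{s-1}\cdots p_r)>\deg(p_{s-1}p_s\cdots p_r)$.
   Context: For a finite group $G$, the power graph $\mathcal{P}(G)$ is the simple undirected graph with vertex set $G$ in which two distinct vertices are adjacent if one is an integral power of the other. $C_n$ denotes the cyclic group of order $n$, identified with $\mathbb{Z}_n=\{0,1,\ldots,n-1\}$, so a positive divisor $d$ of $n$ is regarded as the element $d \bmod n\in\mathbb{Z}_n$ (in particular $n$ itself is the element $0$). $\deg(a)$ is the degree of vertex $a$ in $\mathcal{P}(C_n)$. *)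

(* Defs.v *)
From mathcomp Require Import all_boot.
Set Implicit Arguments. Unset Strict Implicit. Unset Printing Implicit Defensive.

(* Power graph of C_n = Z_n = {0,...,n-1} (additive): distinct x, y are adjacent
   iff one is an integer multiple of the other mod n.  Since k*x mod n only
   depends on k mod n, multiples k with 0 <= k < n cover all integers k. *)
Definition pg_adj (n x y : nat) : bool :=
  (x != y) &&
  ([exists k : 'I_n, y == (k * x) %% n] || [exists k : 'I_n, x == (k * y) %% n]).

Definition pg_deg (n a : nat) : nat :=
  #|[set y : 'I_n | pg_adj n (a %% n) (val y)]|.

(* Main.v *)
Require Import Defs.
From mathcomp Require Import all_boot zify.

Lemma dvd_modn d x n : d %| n -> (d %| x %% n) = (d %| x).
Proof.
move=> dn; rewrite {2}(divn_eq x n) dvdn_addr //.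
exact: dvdn_mull.
Qed.

Lemma mult_char n x y : 0 < n -> y < n ->
  [exists k : 'I_n, y == (k * x) %% n] = (gcdn x n %| y).
Proof.
move=> n0 yn; apply/existsP/idP.
  case=> k /eqP ->; rewrite dvd_modn ?dvdn_gcdr //.
  by apply: dvdn_mull; apply: dvdn_gcdl.
move=> /dvdnP [c yc].
have [a _ /dvdnP [t ht]] := Bezoutr x n0.
move: (gcdn x n) yc ht => g yc ht.
exists (Ordinal (ltn_pmod (c * (n.-1) * a) n0)); apply/eqP => /=.
rewrite modnMml.
have E : c * n.-1 * a * x + (c * t) * n = (c * a * x) * n + y.
  rewrite yc; case: n n0 yn ht => // m _ _ ht /=.
  have : c * (g + a * x) = c * (t * m.+1) by rewrite ht.
  nia.
by rewrite -(modnMDl (c * t)) addnC E modnMDl modn_small.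
Qed.

Lemma sum_split (F : nat -> nat) a b :
  \sum_(0 <= i < a * b) F i = \sum_(0 <= i < a) \sum_(0 <= j < b) F (i * b + j).
Proof.
elim: a => [|a IH]; first by rewrite mul0n !big_geq.
rewrite big_nat_recr //= -IH mulSnr (big_cat_nat _ (leq_addr _ _)) //=.
congr (_ + _).
rewrite -{1}(add0n (a * b)) big_addn addnC addnK.
by apply: eq_bigr => j _; rewrite addnC.
Qed.

Lemma sum_first (B : nat -> bool) i d : 0 < d ->
  \sum_(0 <= j < d) ((d %| i * d + j) && B (i * d + j)) = B (i * d).
Proof.
move=> d0; rewrite big_ltn // addn0 dvdn_mull // /=.
rewrite big_nat_cond big1 ?addn0 // => j /andP [/andP [j1 jd] _].
by rewrite dvdn_addr ?dvdn_mull // gtnNdvd.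
Qed.

Lemma S1 d e : 0 < d -> \sum_(0 <= i < d * e) (d %| i) = e.
Proof.
move=> d0; rewrite mulnC sum_split.
rewrite (eq_bigr (fun _ => 1)) ?sum_nat_const_nat ?subn0 ?muln1 // => i _.
have := @sum_first xpredT i d d0; rewrite /= => <-; by apply: eq_bigr => j _; rewrite andbT.
Qed.

Lemma S2 d e : \sum_(0 <= i < d * e) coprime i e = d * totient e.
Proof.
rewrite sum_split (eq_bigr (fun _ => totient e)) ?sum_nat_const_nat ?subn0 // => i _.
rewrite totient_count_coprime; apply: eq_bigr => j _.
by rewrite -[coprime (i * e + j) e]coprime_modl modnMDl coprime_modl coprime_sym.
Qed.

Lemma S3 d e : 0 < d -> coprime d e ->
  \sum_(0 <= i < d * e) ((d %| i) && coprime i e) = totient e.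
Proof.
move=> d0 cde; rewrite mulnC sum_split totient_count_coprime.
apply: eq_bigr => i _; rewrite (@sum_first (fun y => coprime y e) i d d0).
by rewrite coprimeMl cde andbT coprime_sym.
Qed.

Lemma gcd_cop y d e : coprime d e -> (gcdn y (d * e) %| d) = coprime y e.
Proof.
move=> cde; apply/idP/idP => h.
  have h2 : gcdn y e %| gcdn d e.
    rewrite dvdn_gcd dvdn_gcdr andbT.
    apply: (dvdn_trans _ h); rewrite dvdn_gcd dvdn_gcdl /=.
    by apply: dvdn_mull; apply: dvdn_gcdr.
  by rewrite /coprime -dvdn1 -(eqP cde).
have c2 : coprime (gcdn y (d * e)) e by apply: coprime_dvdl h; apply: dvdn_gcdl.
by rewrite -(Gauss_dvdl d c2) dvdn_gcdr.
Qed.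

Lemma deg_formula n d e : 0 < d -> 0 < e -> n = d * e -> coprime d e ->
  pg_deg n d + 1 + totient e = e + d * totient e.
Proof.
move=> d0 e0 nde cde.
have n0 : 0 < n by rewrite nde muln_gt0 d0.
have xn : d %% n < n by rewrite ltn_mod.
have gx : gcdn (d %% n) n = d by rewrite gcdn_modl nde gcdnMr.
have dx : d %| d %% n by rewrite dvd_modn // nde dvdn_mulr.
pose P (i : nat) := (d %| i) || coprime i e.
have adj : forall y : 'I_n, pg_adj n (d %% n) y = (val y != d %% n) && P y.
  move=> y; rewrite /pg_adj /P !mult_char // gx; congr (_ && (_ || _)).
  by rewrite eq_sym.
  by rewrite dvd_modn ?dvdn_gcdr // -(@gcd_cop y d e cde) -nde.
  idtac.
pose x0 : 'I_n := Ordinal xn.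
have E1 : pg_deg n d + 1 = \sum_(0 <= i < n) P i.
  rewrite big_mkord.
  have H1 : \sum_(i < n) (i == x0 : nat) = 1.
    have := @big_pred1_eq nat 0 addn _ x0 (fun _ => 1).
    rewrite big_mkcond /= => <-; by apply: eq_bigr => i _; case: (i == x0).
  rewrite -H1 /pg_deg -sum1dep_card big_mkcond /=.
  rewrite -big_split /=; apply: eq_bigr => i _; rewrite adj.
  have -> : (i == x0) = (val i == d %% n) by [].
  by case: eqP => [->|]; rewrite /P ?dx //= ?addn0; case: (P i).
have E2 : \sum_(0 <= i < n) P i + \sum_(0 <= i < n) ((d %| i) && coprime i e)
          = \sum_(0 <= i < n) (d %| i) + \sum_(0 <= i < n) coprime i e.
  rewrite -!big_split /=; apply: eq_bigr => i _; rewrite /P.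
  by case: (d %| i); case: (coprime i e).
move: E2; rewrite -E1 nde S1 // S2 S3 //.
Qed.
Lemma tt_ar (A f u v B X : nat) : 1 <= A -> 1 <= f -> 1 <= u -> u < v -> 2 <= B -> X = f * u ->
  A * u.+1 * v + X <= X * v + B * X -> A * u < f * (v.+1 * B + u - 1).
Proof.
move=> A1 f1 u1 uv B2 eX H.
have S1 : A * u * (u.+1 * v) <= f * u * u * (v + B - 1).
  have : u * (A * u.+1 * v + X) <= u * (X * v + B * X) by rewrite leq_mul2l H orbT.
  rewrite eX; timeout 30 nia.
have S2 : u * u * (v + B - 1) < (v.+1 * B + u - 1) * (u.+1 * v).
  have a1 : u * u < u.+1 * v by nia.
  have a2 : v + B - 1 <= v.+1 * B + u - 1 by nia.
  have a3 : 0 < v + B - 1 by lia.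
  timeout 30 nia.
have S3 : f * u * u * (v + B - 1) < f * (v.+1 * B + u - 1) * (u.+1 * v).
  rewrite -!mulnA ltn_pmul2l //; by rewrite !mulnA in S2 *.
have : A * u * (u.+1 * v) < f * (v.+1 * B + u - 1) * (u.+1 * v) by apply: leq_ltn_trans S3.
by rewrite ltn_pmul2r // muln_gt0; apply/andP; split => //; lia.
Qed.
Lemma arith A f p q B d1 d2 d3 : 1 <= A -> 1 <= f -> 2 <= p -> p < q -> 2 <= B ->
 d3 + 1 + f * (p - 1) * (q - 1) = A * p * q + B * (f * (p - 1) * (q - 1)) ->
 d2 + 1 + f * (p - 1) = A * p + q * B * (f * (p - 1)) ->
 d1 + 1 + f = A + p * q * B * f ->
 d3 <= d2 -> d2 < d1.
Proof.
move=> A1 f1 p2 pq B2 E3 E2 E1 h.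
have [u ep] : exists u, p = u.+1 by exists p.-1; lia.
have [v eq] : exists v, q = v.+1 by exists q.-1; lia.
subst p q; rewrite !subn1 /= in E3 E2.
move: E3 E2 E1; set X := f * u => E3 E2 E1.
have H : A * u.+1 * v + X <= X * v + B * X.
  move: E3 E2 h; rewrite !mulnS !mulSn; lia.
have G2 : d2 < d1 <-> A * u < f * (v.+1 * B + u - 1).
  move: E2 E1; rewrite /X; clear; move=> E2 E1.
  timeout 30 nia.
apply/G2.
apply: (@tt_ar A f u v B X) => //; lia.
Qed.

Section Main.
Variable (p : nat -> nat) (r : nat).
Hypothesis pp : forall i, 1 <= i <= r -> prime (p i).
Hypothesis pmono : forall i j, 1 <= i -> i < j -> j <= r -> p i < p j.

Lemma Pr_gt0 a b : 1 <= a -> b <= r.+1 -> 0 < \prod_(a <= i < b) p i.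
Proof.
move=> a1 br; rewrite big_nat_cond; apply: prodn_cond_gt0 => i /andP [/andP [ai ib] _].
by apply: prime_gt0; apply: pp; lia.
Qed.

Lemma Pr_cop a b c : 1 <= a -> a <= b -> b <= c -> c <= r.+1 ->
  coprime (\prod_(b <= j < c) p j) (\prod_(a <= i < b) p i).
Proof.
move=> a1 ab bc cr.
rewrite big_nat_cond; apply: (big_ind (fun x => coprime x _)).
- exact: coprime1n.
- by move=> x y hx hy; rewrite coprimeMl hx hy.
move=> j /andP [/andP [bj jc] _].
rewrite big_nat_cond; apply: (big_ind (fun x => coprime _ x)).
- exact: coprimen1.
- by move=> x y hx hy; rewrite coprimeMr hx hy.
move=> i /andP [/andP [ai ib] _].
have pj : prime (p j) by apply: pp; lia.
have pi : prime (p i) by apply: pp; lia.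
rewrite prime_coprime // dvdn_prime2 //.
apply/eqP => e.
have : p i < p j by apply: pmono; lia.
by rewrite e ltnn.
Qed.
End Main.

Theorem lemma3p3 (r s n : nat) (p : nat -> nat) :
  3 <= r ->
  (forall i, 1 <= i <= r -> prime (p i)) ->
  (forall i j, 1 <= i -> i < j -> j <= r -> p i < p j) ->
  n = \prod_(1 <= i < r.+1) p i ->
  3 <= s <= r ->
  pg_deg n (\prod_(s <= i < r.+1) p i) <= pg_deg n (\prod_(s.-1 <= i < r.+1) p i) ->
  pg_deg n (\prod_(s.-1 <= i < r.+1) p i) < pg_deg n (\prod_(s.-2 <= i < r.+1) p i).
Proof.
move=> r3 pp pmono en /andP [s3 sr].
have [t et] : exists t, s = t.+3 by exists (s - 3); lia.
subst s => /=.
set Pr := fun a b => \prod_(a <= i < b) p i.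
have split : forall b, 1 <= b <= r.+1 -> n = Pr b r.+1 * Pr 1 b.
  move=> b /andP [b1 br]; rewrite en mulnC /Pr (@big_cat_nat _ _ _ b 1 r.+1) //.
have degf : forall b, 1 <= b <= r.+1 ->
    pg_deg n (Pr b r.+1) + 1 + totient (Pr 1 b) = Pr 1 b + Pr b r.+1 * totient (Pr 1 b).
  move=> b hb; apply: deg_formula.
  - by apply: (@Pr_gt0 p r pp); lia.
  - by apply: (@Pr_gt0 p r pp); lia.
  - exact: split.
  - by apply: (@Pr_cop p r pp pmono); lia.
have D3 := degf t.+3 ltac:(lia).
have D2 := degf t.+2 ltac:(lia).
have D1 := degf t.+1 ltac:(lia).
rewrite -/(Pr t.+3 r.+1) -/(Pr t.+2 r.+1) -/(Pr t.+1 r.+1).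
have e2 : Pr t.+2 r.+1 = p t.+2 * Pr t.+3 r.+1 by rewrite /Pr big_ltn //; lia.
have e1 : Pr t.+1 r.+1 = p t.+1 * p t.+2 * Pr t.+3 r.+1 by rewrite /Pr big_ltn -?mulnA -/(Pr t.+2 r.+1) ?e2 //; lia.
have f2 : Pr 1 t.+2 = Pr 1 t.+1 * p t.+1 by rewrite /Pr big_nat_recr.
have f3 : Pr 1 t.+3 = Pr 1 t.+1 * p t.+1 * p t.+2 by rewrite /Pr big_nat_recr //= -/(Pr 1 t.+2) f2.
have cop1 : coprime (Pr 1 t.+1) (p t.+1).
  rewrite coprime_sym; have := @Pr_cop p r pp pmono 1 t.+1 t.+2 isT ltac:(lia) ltac:(lia) ltac:(lia).
  by rewrite big_nat1.
have cop2 : coprime (Pr 1 t.+2) (p t.+2).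
  rewrite coprime_sym; have := @Pr_cop p r pp pmono 1 t.+2 t.+3 isT ltac:(lia) ltac:(lia) ltac:(lia).
  by rewrite big_nat1.
have pr1 : prime (p t.+1) by apply: pp; lia.
have pr2 : prime (p t.+2) by apply: pp; lia.
have T2 : totient (Pr 1 t.+2) = totient (Pr 1 t.+1) * (p t.+1 - 1).
  by rewrite f2 totient_coprime // (totient_prime pr1) subn1.
have T3 : totient (Pr 1 t.+3) = totient (Pr 1 t.+1) * (p t.+1 - 1) * (p t.+2 - 1).
  by rewrite f3 -f2 totient_coprime // T2 (totient_prime pr2) !subn1.
rewrite e2 in D2; rewrite e1 in D1.
rewrite T3 f3 in D3; rewrite T2 f2 in D2.
rewrite e2 e1.
move=> h.
apply: (@arith (Pr 1 t.+1) (totient (Pr 1 t.+1)) (p t.+1) (p t.+2) (Pr t.+3 r.+1) _ _ _ _ _ _ _ _ D3 D2 D1 h).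
- by apply: (@Pr_gt0 p r pp) => //; lia.
- by rewrite totient_gt0; apply: (@Pr_gt0 p r pp) => //; lia.
- by apply: prime_gt1; apply: pp; lia.
- by apply: pmono; lia.
- have a : 0 < Pr t.+4 r.+1 by apply: (@Pr_gt0 p r pp) => //; lia.
  have b : 1 < p t.+3 by apply: prime_gt1; apply: pp; lia.
  have -> : Pr t.+3 r.+1 = p t.+3 * Pr t.+4 r.+1 by rewrite /Pr big_ltn //; lia.
  by rewrite -(muln1 2) leq_mul.
Qed.
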